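(* Let $t_1, t_2 \in \mathsf{Topo}$ and suppose $f$ embeds $t_1$ inside $t_2$. For every $q \in \mathsf{PIFOTree}(t_1)$, if $\vdash q$ then $\vdash \widehat f(q)$.
   Context: Fix a set $\mathsf{Pkt}$ of packets and a totally ordered set $\mathsf{Rk}$ of ranks. PIFOs: for a set $S$, a PIFO over $S$ is a finite sequence of pairs $(s,r)\in S\times\mathsf{Rk}$ in insertion order; $\mathsf{PIFO}(S)$ is the set of these; $|p|$ is the number of entries, $|p|_s$ the number with element $s$. Topologies: $\mathsf{Topo}$ is the smallest set with $*\in\mathsf{Topo}$ and $\mathsf{Node}(\vec t)\in\mathsf{Topo}$ for $n\in\mathbb{N}$, $\vec t\in\mathsf{Topo}^n$. PIFO trees: $\mathsf{Leaf}(p)\in\mathsf{PIFOTree}( * )$ for $p\in\mathsf{PIFO}(\mathsf{Pkt})$; $\mathsf{Internal}(\vec q,p)\in\mathsf{PIFOTree}(\mathsf{Node}(\vec t))$ whenever $\vec t\in\mathsf{Topo}^n$, $p\in\mathsf{PIFO}(\{1,\dots,n\})$, $\vec q[i]\in\mathsf{PIFOTree}(\vec t[i])$. Size: $|\mathsf{Leaf}(p)|=|p|$, $|\mathsf{Internal}(\vec q,p)|=\sum_i|\vec q[i]|$. Well-formedness: $\vdash\mathsf{Leaf}(p)$ always; $\vdash\mathsf{Internal}(\vec q,p)$ iff for all $i$, $\vdash\vec q[i]$ and $|p|_i=|\vec q[i]|$. Addresses: $\mathsf{Addr}(t)\subseteq\mathbb{N}^*$ is the smallest set with $\epsilon\in\mathsf{Addr}(t)$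 and $i\cdot\alpha\in\mathsf{Addr}(\mathsf{Node}(\vec t))$ for $1\le i\le n$, $\alpha\in\mathsf{Addr}(\vec t[i])$. Subtrees: $t/\epsilon=t$, $\mathsf{Node}(\vec t)/(i\cdot\alpha)=\vec t[i]/\alpha$. An embedding of $t_1$ in $t_2$ is an injective $f:\mathsf{Addr}(t_1)\to\mathsf{Addr}(t_2)$ with $f(\epsilon)=\epsilon$, $t_2/f(\alpha)=*$ whenever $t_1/\alpha=*$, and $\alpha$ a prefix of $\alpha'$ iff $f(\alpha)$ a prefix of $f(\alpha')$. If $t_1=*$ then $t_2=*$; if $t_1=\mathsf{Node}(\vec t_1)$, the map $f_i$ defined by $f(i\cdot\alpha)=f(i)\cdot f_i(\alpha)$ is an embedding of $t_1/i$ in $t_2/f(i)$. Lifting $\widehat f:\mathsf{PIFOTree}(t_1)\to\mathsf{PIFOTree}(t_2)$, by recursion on $t_1$: if $t_1=*$, $\widehat f(q)=q$. If $t_1=\mathsf{Node}(\vec t_1)$ with $n$ children and $q=\mathsf{Internal}(\vec q,p)$, define for each address $\alpha$ of $t_2$ that is a prefix of some $f(i)$ a tree $\widehat f(q)_\alpha\in\mathsf{PIFOTree}(t_2/\alpha)$, from longer to shorter $\alpha$: if $\alpha=f(i)$, $\widehat f(q)_\alpha=\widehat{f_i}(\vec q[i])$; otherwise $t_2/\alpha$ has some $m$ children and $\widehat f(q)_\alpha=\mathsf{Internal}(\vec q_\alpha,p_\alpha)$, where $\vec q_\alpha[j]=\widehat f(q)_{\alpha\cdot j}$ if $\alpha\cdot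 j$ is a prefix of some $f(i)$ and otherwise $\vec q_\alpha[j]$ is the tree of topology $t_2/(\alpha\cdot j)$ with all PIFOs empty; and $p_\alpha$ is obtained from $p$ by replacing each entry $(i,r)$ by $(j,r)$ where $\alpha\cdot j$ is a prefix of $f(i)$, deleting entries for which no such $j$ exists, keeping the order. Finally $\widehat f(q)=\widehat f(q)_\epsilon$. *)

(* Defs.v *)
From mathcomp Require Import all_boot all_order.
Set Implicit Arguments. Unset Strict Implicit. Unset Printing Implicit Defensive.

Inductive topo : Type := Star | Node of seq topo.

(* Addresses (0-based child indices). *)
Fixpoint addr (t : topo) (a : seq nat) {struct a} : bool :=
  match a, t with
  | [::], _ => true
  | i :: a', Node ts => (i < size ts) && addr (nth Star ts i) a'
  | _ :: _, Star => false
  end.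

(* Subtree t/a (meaningful for a an address of t). *)
Fixpoint subtopo (t : topo) (a : seq nat) {struct a} : topo :=
  match a, t with
  | [::], _ => t
  | i :: a', Node ts => subtopo (nth Star ts i) a'
  | _ :: _, Star => Star
  end.

(* Embedding of t1 in t2 (f is only relevant on Addr(t1)). *)
Definition embedding (t1 t2 : topo) (f : seq nat -> seq nat) : Prop :=
  [/\ (forall a, addr t1 a -> addr t2 (f a)),
      (forall a a', addr t1 a -> addr t1 a' -> f a = f a' -> a = a'),
      f [::] = [::],
      (forall a, addr t1 a -> subtopo t1 a = Star -> subtopo t2 (f a) = Star)
    & (forall a a', addr t1 a -> addr t1 a' ->
         prefix a a' = prefix (f a) (f a'))].

(* f_i : f (i . a) = f (i) . f_i (a) *)
Definition fchild (f : seq nat -> seq nat) (i : nat) : seq nat -> seq nat :=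
  fun a => drop (size (f [:: i])) (f (i :: a)).

Definition child_towards (a b : seq nat) : option nat :=
  if prefix a b && (size a < size b) then Some (nth 0 b (size a)) else None.

Section Trees.
Variables (Pkt Rk : Type).

(* PIFOs over S: finite sequences of (element, rank) pairs in insertion order. *)
Definition PIFO (S : Type) := seq (S * Rk).

(* Raw PIFO trees; Internal qs p with child indices 0..n-1 in p. *)
Inductive ptree : Type :=
  | Leaf of PIFO Pkt
  | Internal of seq ptree & PIFO nat.

Fixpoint has_topo (q : ptree) (t : topo) {struct q} : Prop :=
  match q, t with
  | Leaf _, Star => True
  | Internal qs p, Node ts =>
      size qs = size ts /\ all (fun e => e.1 < size ts) p /\
      (fix go (qs : seq ptree) (ts : seq topo) {struct qs} : Prop :=
         match qs, ts with
         | [::], [::] => True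
         | q :: qs', t :: ts' => has_topo q t /\ go qs' ts'
         | _, _ => False
         end) qs ts
  | _, _ => False
  end.

Fixpoint tsize (q : ptree) : nat :=
  match q with
  | Leaf p => size p
  | Internal qs p => sumn (map tsize qs)
  end.

Fixpoint wf (q : ptree) : Prop :=
  match q with
  | Leaf _ => True
  | Internal qs p =>
      (fix go (qs : seq ptree) {struct qs} : Prop :=
         match qs with [::] => True | q :: qs' => wf q /\ go qs' end) qs /\
      (forall i, i < size qs ->
         count (fun e => e.1 == i) p = tsize (nth (Leaf [::]) qs i))
  end.

Fixpoint empty_tree (t : topo) : ptree :=
  match t with
  | Star => Leaf [::]
  | Node ts => Internal (map empty_tree ts) [::]
  end.

Definition lifter := topo -> (seq nat -> seq nat) -> ptree -> ptree.

(* build n recs qs p f a u  computes  \hat f(q)_a  where  u = t2/a,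
   q = Internal qs p has n children and recs[i] = \hat{(.)} for child topology i. *)
Fixpoint build (n : nat) (recs : seq lifter) (qs : seq ptree) (p : PIFO nat)
    (f : seq nat -> seq nat) (a : seq nat) (u : topo) {struct u} : ptree :=
  let i := find (fun i => f [:: i] == a) (iota 0 n) in
  if i < n then
    nth (fun _ _ q => q) recs i u (fchild f i) (nth (Leaf [::]) qs i)
  else
    match u with
    | Star => Leaf [::] (* unreachable for a strict prefix of some f(i) *)
    | Node us =>
        Internal
          ((fix go (us : seq topo) (j : nat) {struct us} : seq ptree :=
              match us with
              | [::] => [::]
              | u' :: us' =>
                  (if has (fun i => prefix (rcons a j) (f [:: i])) (iota 0 n)
                   then build n recs qs p f (rcons a j) u'
                   else empty_tree u') :: go us' j.+1
              end) us 0)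
          (pmap (fun e => omap (fun j => (j, e.2)) (child_towards a (f [:: e.1]))) p)
    end.

Fixpoint hat_lift (t1 : topo) : lifter :=
  match t1 with
  | Star => fun _ _ q => q
  | Node ts1 =>
      let recs := map hat_lift ts1 in
      fun t2 f q =>
        match q with
        | Internal qs p => build (size ts1) recs qs p f [::] t2
        | Leaf _ => q (* ill-typed input *)
        end
  end.

End Trees.

(* Main.v *)
Require Import Defs.
From mathcomp Require Import all_boot all_order.
Import Defs.
Set Implicit Arguments. Unset Strict Implicit. Unset Printing Implicit Defensive.

Definition topo_ind' (P : topo -> Prop) (HS : P Star)
  (HN : forall ts, (forall i, i < size ts -> P (nth Star ts i)) -> P (Node ts)) :
  forall t, P t.
Proof.
fix IH 1. case => [|ts]; first exact HS. apply HN.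
move: ts; fix IH2 1; case => [|t ts] [|i] Hi.
- discriminate Hi.
- discriminate Hi.
- exact: (IH t).
- exact: (IH2 ts i Hi).
Defined.

Lemma prefix_rconsE (a b : seq nat) j :
  prefix (rcons a j) b = [&& prefix a b, size a < size b & nth 0 b (size a) == j].
Proof.
elim: a b => [|x a IH] [|y b] //=.
- by rewrite prefix0s andbT eq_sym.
- by rewrite IH andbA.
Qed.

Lemma child_towardsE a b j : (child_towards a b == Some j) = prefix (rcons a j) b.
Proof.
rewrite prefix_rconsE /child_towards; case: ifP => /=.
  by case/andP => -> ->.
by case: (prefix a b) (size a < size b) => [] [].
Qed.

Lemma addr_cat t x y : addr t (x ++ y) = addr t x && addr (subtopo t x) y.
Proof.
elim: x t => [|i x IH] [|ts] //=.
by rewrite IH andbA.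
Qed.

Lemma subtopo_cat t x y : subtopo t (x ++ y) = subtopo (subtopo t x) y.
Proof.
elim: x t => [|i x IH] [|ts] //=; by case: (y).
Qed.

Lemma addr_strict t a b : addr t b -> prefix a b -> size a < size b ->
  exists us, subtopo t a = Node us /\ nth 0 b (size a) < size us.
Proof.
elim: a t b => [|x a IH] [|ts] [|y b] //=.
- by move=> /andP[H _] _ _; exists ts.
- by move=> /andP[H1 H2] /andP[/eqP -> H3] H4; apply: IH.
Qed.

Lemma sum_iota_pick (m x : nat) (c : nat -> nat) : x < m ->
  \sum_(i <- iota 0 m) (if i == x then c i else 0) = c x.
Proof.
move=> Hx; rewrite (bigD1_seq x) ?mem_iota ?iota_uniq //= eqxx big1 ?addn0 //.
by move=> i /negPf ->.
Qed.
Section Main.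
Variables (Pkt Rk : Type).
Notation pt := (ptree Pkt Rk).
Notation L0 := (@Leaf Pkt Rk [::]).

Lemma has_topo_node (qs : seq pt) p ts : has_topo (Internal qs p) (Node ts) ->
  [/\ size qs = size ts, all (fun e => e.1 < size ts) p &
   forall i, i < size ts -> has_topo (nth L0 qs i) (nth Star ts i)].
Proof.
move=> /= [Hs [Ha Hg]]; split => //; clear Hs Ha.
elim: qs ts Hg => [|q qs IH] [|t ts] //= [H1 H2] [|i] //= Hi; exact: IH.
Qed.

Lemma wf_node (qs : seq pt) p : wf (Internal qs p) <->
  (forall i, i < size qs -> wf (nth L0 qs i)) /\
  (forall i, i < size qs -> count (fun e => e.1 == i) p = tsize (nth L0 qs i)).
Proof.
rewrite /=; split => -[H1 H2]; split => //; clear H2.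
- elim: qs H1 => [|q qs IH] //= [H1 H2] [|i] //= Hi; exact: IH.
- elim: qs H1 => [|q qs IH] //= H; split; first exact: (H 0).
  by apply: IH => i Hi; apply: (H i.+1).
Qed.

Lemma empty_tree_ok t : wf (@empty_tree Pkt Rk t) /\ tsize (@empty_tree Pkt Rk t) = 0.
Proof.
elim/topo_ind': t => [|ts IH]; first by [].
have H0 : forall i, i < size ts -> tsize (nth L0 (map (@empty_tree Pkt Rk) ts) i) = 0.
  by move=> i Hi; rewrite (nth_map Star) //; case: (IH i Hi).
split.
- apply (proj2 (wf_node _ _)); rewrite size_map; split => i Hi; last by rewrite H0.
  by rewrite (nth_map Star) //; case: (IH i Hi).
- rewrite /=.
  elim: ts H0 {IH} => //= t ts IHt H; rewrite (H 0) // IHt // => i Hi; exact: (H i.+1).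
Qed.

Fixpoint gomap (G : nat -> topo -> pt) (us : seq topo) (j : nat) : seq pt :=
  match us with [::] => [::] | u :: us' => G j u :: gomap G us' j.+1 end.

Lemma gomapE G us j : gomap G us j = [seq G (j + k) (nth Star us k) | k <- iota 0 (size us)].
Proof.
elim: us j => [|u us IH] j //=; rewrite addn0 IH -(addn0 1) iotaDl -map_comp.
congr cons; apply: eq_map => k /=; by rewrite addnS add0n.
Qed.

Definition fidx (f : seq nat -> seq nat) a n := find (fun i => f [:: i] == a) (iota 0 n).

Lemma build_eq n recs (qs : seq pt) p f a u :
  build n recs qs p f a u =
  if fidx f a n < n then
    nth (fun _ _ q => q) recs (fidx f a n) u (fchild f (fidx f a n)) (nth L0 qs (fidx f a n))
  else
    match u with
    | Star => L0
    | Node us =>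
        Internal
          (gomap (fun j u' =>
                  (if has (fun i => prefix (rcons a j) (f [:: i])) (iota 0 n)
                   then build n recs qs p f (rcons a j) u'
                   else @empty_tree Pkt Rk u')) us 0)
          (pmap (fun e => omap (fun j => (j, e.2)) (child_towards a (f [:: e.1]))) p)
    end.
Proof.
case: u => [|us]; first by [].
rewrite /=; case: ifP => // _; congr Internal.
set z := iota 0 n; elim: us 0 => //= u us IH j; by rewrite IH.
Qed.


Lemma strict_of (a b : seq nat) : prefix a b -> b != a -> size a < size b.
Proof.
move=> H Hne; rewrite ltn_neqAle size_prefix // andbT; apply: contra Hne => /eqP Hs.
by move: H; rewrite prefixE Hs take_size.
Qed.

Lemma sum_pick1 m x (P : pred nat) g : x < m -> (forall i, i < m -> P i = (i == x)) ->
  \sum_(i <- iota 0 m | P i) g i = g x.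
Proof.
move=> Hx H; rewrite big_mkcond (eq_big_seq (fun i => if i == x then g i else 0)).
  exact: sum_iota_pick.
by move=> i; rewrite mem_iota add0n /= => Hi; rewrite H.
Qed.

Section NodeCase.
Variables (ts1 : seq topo) (t2 : topo) (f : seq nat -> seq nat) (qs : seq pt) (p : PIFO Rk nat).
Hypothesis Hemb : embedding (Node ts1) t2 f.
Hypothesis Hq : has_topo (Internal qs p) (Node ts1).
Hypothesis IH : forall i, i < size ts1 -> forall t2' f' (q' : pt),
  embedding (nth Star ts1 i) t2' f' -> has_topo q' (nth Star ts1 i) ->
  tsize (hat_lift (nth Star ts1 i) t2' f' q') = tsize q' /\
  (wf q' -> wf (hat_lift (nth Star ts1 i) t2' f' q')).

Local Notation n := (size ts1).
Let recs := map (@hat_lift Pkt Rk) ts1.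
Let g i := tsize (nth L0 qs i).

Lemma L_addrF i : i < n -> addr t2 (f [:: i]).
Proof. by case: Hemb => E1 _ _ _ _ Hi; apply: E1; rewrite /= Hi. Qed.

Lemma L_prefF i i' : i < n -> i' < n -> prefix (f [:: i]) (f [:: i']) = (i == i').
Proof.
case: Hemb => _ _ _ _ E5 Hi Hi'; rewrite -E5 /= ?Hi ?Hi' //.
by rewrite andbT.
Qed.

Lemma L_fchild i a : i < n -> addr (nth Star ts1 i) a -> f (i :: a) = f [:: i] ++ fchild f i a.
Proof.
case: Hemb => _ _ _ _ E5 Hi Ha.
have : prefix (f [:: i]) (f (i :: a)) by rewrite -E5 /= ?eqxx ?prefix0s ?Hi ?Ha.
by rewrite /fchild; case/prefixP => s ->; rewrite drop_size_cat.
Qed.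

Lemma L_embchild i : i < n -> embedding (nth Star ts1 i) (subtopo t2 (f [:: i])) (fchild f i).
Proof.
move=> Hi; case: Hemb => E1 E2 E3 E4 E5; split.
- move=> a Ha; have := E1 (i :: a); rewrite /= Hi Ha => /(_ isT).
  by rewrite (L_fchild Hi Ha) addr_cat => /andP[].
- move=> a a' Ha Ha' Heq.
  have : f (i :: a) = f (i :: a') by rewrite (L_fchild Hi Ha) (L_fchild Hi Ha') Heq.
  by move/E2; rewrite /= Hi Ha Ha' => /(_ isT isT) [].
- by rewrite /fchild drop_size.
- move=> a Ha Hs; have := E4 (i :: a); rewrite /= Hi Ha => /(_ isT Hs).
  by rewrite (L_fchild Hi Ha) subtopo_cat.
- move=> a a' Ha Ha'; have := E5 (i :: a) (i :: a'); rewrite /= Hi Ha Ha' eqxx /=.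
  by rewrite (L_fchild Hi Ha) (L_fchild Hi Ha') prefix_catr // eqxx => ->.
Qed.

Lemma L_found a : fidx f a n < n -> f [:: fidx f a n] = a.
Proof.
move=> H; apply/eqP; have Hh : has (fun i => f [:: i] == a) (iota 0 n).
  by rewrite has_find size_iota.
by have := nth_find 0 Hh; rewrite nth_iota ?add0n //; exact: H.
Qed.

Lemma L_notfound a : ~~ (fidx f a n < n) -> forall i, i < n -> f [:: i] != a.
Proof.
move=> H i Hi; have Hh : ~~ has (fun i => f [:: i] == a) (iota 0 n).
  by rewrite has_find size_iota.
by move/hasPn: Hh => /(_ i); rewrite mem_iota add0n Hi => /(_ isT).
Qed.

Lemma found_facts a u : u = subtopo t2 a -> fidx f a n < n ->
  let i0 := fidx f a n in
  nth (fun _ _ q => q) recs i0 u (fchild f i0) (nth L0 qs i0) =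
    hat_lift (nth Star ts1 i0) u (fchild f i0) (nth L0 qs i0) /\
  embedding (nth Star ts1 i0) u (fchild f i0) /\
  has_topo (nth L0 qs i0) (nth Star ts1 i0).
Proof.
move=> Hu Hf i0; have HF := L_found Hf.
split; first by rewrite /recs (nth_map Star).
split; first by rewrite Hu -HF; exact: L_embchild.
by case: (has_topo_node Hq) => _ _ Ht; apply: Ht.
Qed.

Lemma S_found a u : u = subtopo t2 a -> fidx f a n < n ->
  tsize (nth (fun _ _ q => q) recs (fidx f a n) u (fchild f (fidx f a n)) (nth L0 qs (fidx f a n)))
  = \sum_(i <- iota 0 n | prefix a (f [:: i])) g i.
Proof.
move=> Hu Hf; have [-> [He Ht]] := found_facts Hu Hf.
rewrite (IH Hf He Ht).1 (sum_pick1 (x := fidx f a n)) //.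
by move=> i Hi; rewrite -{1}(L_found Hf) L_prefF // eq_sym.
Qed.

Lemma S_build u : forall a, u = subtopo t2 a ->
  tsize (build n recs qs p f a u) = \sum_(i <- iota 0 n | prefix a (f [:: i])) g i.
Proof.
elim/topo_ind': u => [|us IHu] a Hu; rewrite build_eq; (case: ifP => Hf; first exact: S_found);
  move/negbT: Hf => Hf.
- rewrite big1_seq // => i /andP[Hp]; rewrite mem_iota add0n => Hi.
  have Hs := strict_of Hp (L_notfound Hf Hi).
  have [us [Hus _]] := addr_strict (L_addrF Hi) Hp Hs.
  by rewrite -Hu in Hus.
- rewrite gomapE /= sumnE !big_map.
  rewrite (eq_big_seq (fun k => \sum_(i <- iota 0 n) (if prefix (rcons a k) (f [:: i]) then g i else 0))); last first.
    move=> k; rewrite mem_iota add0n => Hk; rewrite add0n; case: ifP => Hh.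
    - rewrite IHu // ?big_mkcond //. by rewrite -cats1 subtopo_cat -Hu.
    - rewrite (empty_tree_ok _).2 big1_seq // => i /andP[_ Hi]; case: ifP => // Hp.
      by move/hasPn: Hh => /(_ i Hi); rewrite Hp.
  rewrite exchange_big /= [RHS]big_mkcond; apply: eq_big_seq => i; rewrite mem_iota add0n => Hi.
  case: ifP => Hp.
  - have Hs := strict_of Hp (L_notfound Hf Hi).
    have [us' [Hus Hlt]] := addr_strict (L_addrF Hi) Hp Hs.
    rewrite -Hu in Hus; case: Hus => ?; subst us'.
    rewrite (eq_big_seq (fun k => if k == nth 0 (f [:: i]) (size a) then g i else 0)) ?sum_iota_pick // => k _.
    by rewrite prefix_rconsE Hp Hs /= eq_sym.
  - by rewrite big1 // => k _; rewrite prefix_rconsE Hp.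
Qed.

Lemma count_pmap (pp : PIFO Rk nat) a j : all (fun e => e.1 < n) pp ->
  count (fun e => e.1 == j)
    (pmap (fun e => omap (fun j => (j, e.2)) (child_towards a (f [:: e.1]))) pp) =
  \sum_(i <- iota 0 n) (if prefix (rcons a j) (f [:: i]) then count (fun e => e.1 == i) pp else 0).
Proof.
elim: pp => [|e pp IHp] /=.
  by move=> _; rewrite big1 // => i _; case: ifP.
case/andP => He Hall.
have -> : count (fun e => e.1 == j)
    (pmap (fun e => omap (fun j => (j, e.2)) (child_towards a (f [:: e.1]))) (e :: pp)) =
    (child_towards a (f [:: e.1]) == Some j) +
    count (fun e => e.1 == j)
      (pmap (fun e => omap (fun j => (j, e.2)) (child_towards a (f [:: e.1]))) pp).
  by rewrite /=; case: (child_towards a (f [:: e.1])) => [j'|] //=.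
rewrite IHp // child_towardsE.
rewrite [RHS](eq_bigr (fun i => (if prefix (rcons a j) (f [:: i]) then nat_of_bool (e.1 == i) else 0) +
  (if prefix (rcons a j) (f [:: i]) then count (fun e => e.1 == i) pp else 0))); last first.
  by move=> i _ /=; case: ifP.
rewrite big_split /=; congr addn.
rewrite (eq_bigr (fun i => if i == e.1 then nat_of_bool (prefix (rcons a j) (f [:: i])) else 0)).
  by rewrite sum_iota_pick.
by move=> i _; case: (eqVneq i e.1) => [->|Hne]; case: ifP.
Qed.

Hypothesis Hwf : wf (Internal qs p).

Lemma W_found a u : u = subtopo t2 a -> fidx f a n < n ->
  wf (nth (fun _ _ q => q) recs (fidx f a n) u (fchild f (fidx f a n)) (nth L0 qs (fidx f a n))).
Proof.
move=> Hu Hf; have [-> [He Ht]] := found_facts Hu Hf; apply: (IH Hf He Ht).2.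
have [Hc _] := proj1 (wf_node _ _) Hwf; apply: Hc.
by case: (has_topo_node Hq) => ->.
Qed.

Lemma W_build u : forall a, u = subtopo t2 a -> wf (build n recs qs p f a u).
Proof.
elim/topo_ind': u => [|us IHu] a Hu; rewrite build_eq; (case: ifP => Hf; first exact: W_found);
  move/negbT: Hf => Hf; first by [].
apply (proj2 (wf_node _ _)); rewrite gomapE size_map size_iota; split => j Hj;
  rewrite (nth_map 0) ?size_iota // nth_iota // add0n.
- case: ifP => _; last exact: (empty_tree_ok _).1.
  by apply: IHu => //; rewrite -cats1 subtopo_cat -Hu.
- rewrite count_pmap; last by case: (has_topo_node Hq).
  transitivity (\sum_(i <- iota 0 n) (if prefix (rcons a j) (f [:: i]) then g i else 0)).
    apply: eq_big_seq => i; rewrite mem_iota add0n => Hi; case: ifP => // _.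
    have [_ Hc] := proj1 (wf_node _ _) Hwf; rewrite Hc //.
    by case: (has_topo_node Hq) => ->.
  symmetry; case: ifP => Hh.
    by rewrite S_build ?big_mkcond // -cats1 subtopo_cat -Hu.
  rewrite (empty_tree_ok _).2 big1_seq // => i /andP[_ Hi]; case: ifP => // Hp.
  by move/hasPn: Hh => /(_ i Hi); rewrite Hp.
Qed.

End NodeCase.

Lemma main_lemma t1 : forall t2 f (q : pt), embedding t1 t2 f -> has_topo q t1 ->
  tsize (hat_lift t1 t2 f q) = tsize q /\ (wf q -> wf (hat_lift t1 t2 f q)).
Proof.
elim/topo_ind': t1 => [|ts1 IHt] t2 f q Hemb Hq; first by [].
case: q Hq => [l|qs p] Hq; first by case: Hq.
change (tsize (build (size ts1) (map (@hat_lift Pkt Rk) ts1) qs p f [::] t2) = tsize (Internal qs p) /\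
  (wf (Internal qs p) -> wf (build (size ts1) (map (@hat_lift Pkt Rk) ts1) qs p f [::] t2))).
have Hu : t2 = subtopo t2 [::] by case: t2 {Hemb}.
split.
- rewrite (S_build Hemb Hq IHt Hu) /= sumnE big_map [RHS](big_nth L0) /index_iota subn0.
  have [-> _ _] := has_topo_node Hq.
  by apply: eq_bigl => i; rewrite prefix0s.
- by move=> Hwf; exact: (W_build Hemb Hq IHt Hwf Hu).
Qed.

End Main.

Theorem lemma5p5 (Pkt : Type) (d : Order.disp_t) (Rk : orderType d)
    (t1 t2 : topo) (f : seq nat -> seq nat) (q : ptree Pkt Rk) :
  embedding t1 t2 f -> has_topo q t1 -> wf q -> wf (hat_lift t1 t2 f q).
Proof.
by move=> He Hq Hw; exact: ((main_lemma He Hq).2 Hw).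
Qed.
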